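(* Let $\mathcal{G}=(\mathcal{V}_A\cup\mathcal{V}_T,\mathcal{E},w)$ be a weighted bipartite graph with $|\mathcal{V}_A|\le|\mathcal{V}_T|$ that has at least one maximum matching (in the sense defined in the context). Let $e^*\in A(\mathcal{G})$ be a bottleneck edge of $\mathcal{G}$. Let $\mathcal{G}^-$ be the graph obtained from $\mathcal{G}$ by deleting both endpoints of $e^*$ together with all edges incident to them, and let $\mathcal{G}^+$ be the graph obtained from $\mathcal{G}$ by deleting only the edge $e^*$. Let $e^-\in A(\mathcal{G}^-)$ be a bottleneck edge of $\mathcal{G}^-$. Then $w_{e^-}\le w_{e^*}$. Moreover, if $\mathcal{G}^+$ has a bottleneck edge $e^+\in A(\mathcal{G}^+)$, then $w_{e^*}\le w_{e^+}$.
   Context: A weighted bipartite graph $\mathcal{G}=(\mathcal{V}_A\cup\mathcal{V}_T,\mathcal{E},w)$ has disjoint vertex sets $\mathcal{V}_A$ (agents) and $\mathcal{V}_T$ (tasks), edge set $\mathcal{E}\subseteq\mathcal{V}_A\times\mathcal{V}_T$, and real edge weights $w_e$, $e\in\mathcal{E}$. A matching is a set of pairwise non-adjacent edges (no two share a vertex). A maximum matching of such a graph is a matching in which every vertex of the agent side $\mathcal{V}_A$ is covered. For a graph $H$ having at least one maximum matching, its bottleneck value is $b(H)=\min_M \max_{e\in M} w_e$, the minimum over maximum matchings $M$ of $H$; a bottleneck edge of $H$ is an edge $e$ with $w_e=b(H)$ that belongs to some maximum matching $M$ of $H$ with $\max_{e'\in M}w_{e'}=b(H)$, and $A(H)$ denotes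 the set of bottleneck edges of $H$. (For $\mathcal{G}^-$ the agent side is $\mathcal{V}_A$ with the endpoint of $e^*$ removed; for $\mathcal{G}^+$ the vertex sets are unchanged.) *)

(* Defs.v *)
From mathcomp Require Import all_boot all_order all_algebra.
Set Implicit Arguments. Unset Strict Implicit. Unset Printing Implicit Defensive.
Import Order.TTheory GRing.Theory Num.Theory.
Local Open Scope ring_scope.

(* A weighted bipartite graph: agents VA : {set A}, tasks VT : {set T},
   edges E : {set A * T} with E \subset setX VA VT, weights w : A * T -> R. *)

Section Bip.
Variables (A T : finType) (R : realFieldType).

Definition is_matching (E M : {set A * T}) : Prop :=
  M \subset E /\
  (forall e1 e2, e1 \in M -> e2 \in M -> e1 != e2 ->
     e1.1 != e2.1 /\ e1.2 != e2.2).

(* maximum matching (paper's sense): a matching covering every agent of VA *)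
Definition is_max_matching (VA : {set A}) (E M : {set A * T}) : Prop :=
  is_matching E M /\ (forall a, a \in VA -> exists2 e, e \in M & e.1 = a).

Definition is_max_weight (w : A * T -> R) (M : {set A * T}) (b : R) : Prop :=
  (exists2 e, e \in M & w e = b) /\ (forall e, e \in M -> w e <= b).

Definition is_bottleneck_value (VA : {set A}) (E : {set A * T})
    (w : A * T -> R) (b : R) : Prop :=
  (exists2 M, is_max_matching VA E M & is_max_weight w M b) /\
  (forall M b', is_max_matching VA E M -> is_max_weight w M b' -> b <= b').

Definition is_bottleneck_edge (VA : {set A}) (E : {set A * T})
    (w : A * T -> R) (e : A * T) : Prop :=
  exists b, [/\ is_bottleneck_value VA E w b, w e = b &
    exists M, [/\ is_max_matching VA E M, e \in M & is_max_weight w M b]].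

End Bip.

(* Main.v *)
Require Import Defs.
From mathcomp Require Import all_boot all_order all_algebra.
Import Order.TTheory GRing.Theory Num.Theory.
Local Open Scope ring_scope.

Lemma seq_max (X : eqType) (R : realFieldType) (w : X -> R) (x0 : X) (s : seq X) :
  exists2 e, e \in x0 :: s & forall e', e' \in x0 :: s -> w e' <= w e.
Proof.
elim: s x0 => [|y s IH] x0.
  by exists x0 => [|e']; rewrite ?inE // => /eqP ->.
have [e He Hm] := IH y.
have [le|lt] := leP (w x0) (w e).
  exists e; first by rewrite inE He orbT.
  move=> e'; rewrite inE => /orP [/eqP -> //|]; exact: Hm.
exists x0; first by rewrite inE eqxx.
move=> e'; rewrite inE => /orP [/eqP -> //|/Hm H]; exact: (le_trans H (ltW lt)).
Qed.

Lemma set_max (A T : finType) (R : realFieldType) (w : A * T -> R)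
  (S : {set A * T}) x : x \in S -> exists b, is_max_weight w S b.
Proof.
move=> xS.
have : x \in enum S by rewrite mem_enum.
case: (enum S) (mem_enum S) => [//|x0 s] Hs _.
have [e He Hm] := @seq_max _ _ w x0 s.
exists (w e); split.
  by exists e; rewrite // -Hs.
by move=> e' He'; apply: Hm; rewrite Hs.
Qed.

Theorem lemma1 (A T : finType) (R : realFieldType)
  (VA : {set A}) (VT : {set T}) (E : {set A * T}) (w : A * T -> R)
  (HE : E \subset setX VA VT)
  (Hcard : (#|VA| <= #|VT|)%N)
  (Hmm : exists M, is_max_matching VA E M)
  (es : A * T) (Hes : is_bottleneck_edge VA E w es) :
  (* G^- : delete both endpoints of es and all incident edges *)
  (forall em, is_bottleneck_edge (VA :\ es.1)
                 [set e in E | (e.1 != es.1) && (e.2 != es.2)] w em ->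
              w em <= w es) /\
  (* G^+ : delete only the edge es *)
  (forall ep, is_bottleneck_edge VA (E :\ es) w ep -> w es <= w ep).
Proof.
case: Hes => b [[_ Hbmin] Hwb [Ms [[[MsE Msm] Mscov] esM [_ Msb]]]].
split.
- move=> em [bm [[_ Hbmmin] Hwbm [Mm [[[MmE _] _] emM _]]]].
  have emE' := subsetP MmE _ emM.
  rewrite inE in emE'; case/andP: emE' => emE /andP [em1 _].
  have emA : em.1 \in VA.
    by have := subsetP HE _ emE; rewrite inE => /andP [].
  have [e eMs e1] := Mscov _ emA.
  have ene : e != es by apply/eqP => eq; rewrite -e1 eq eqxx in em1.
  have eMs' : e \in Ms :\ es by rewrite !inE ene.
  have [b' Hb'] := @set_max _ _ _ w _ _ eMs'.
  have mm : is_max_matching (VA :\ es.1)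
             [set e in E | (e.1 != es.1) && (e.2 != es.2)] (Ms :\ es).
    split; first split.
    + apply/subsetP => x; rewrite !inE => /andP [xne xM].
      have [h1 h2] := Msm _ _ xM esM xne.
      by rewrite h1 h2 (subsetP MsE _ xM).
    + move=> e1' e2' ; rewrite !inE => /andP [_ H1] /andP [_ H2]; exact: Msm.
    + move=> a; rewrite !inE => /andP [ane aA].
      have [x xM x1] := Mscov _ aA.
      exists x => //; rewrite !inE xM andbT.
      by apply/eqP => eq; rewrite -x1 eq eqxx in ane.
  rewrite Hwbm Hwb.
  apply: le_trans (Hbmmin _ _ mm Hb') _.
  case: Hb' => [[x xM <-] _]; apply: Msb.
  by move: xM; rewrite !inE => /andP [].
- move=> ep [bp [_ Hwbp [Mp [[[MpE Mpm] Mpcov] _ Hmp]]]].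
  rewrite Hwbp Hwb; apply: (Hbmin Mp) => //.
  split => //; split => //.
  by apply: subset_trans MpE _; apply: subD1set.
Qed.
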